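(* For all integers $k,\ell$, there is an existential first-order ($\Sigma_1$) formula $\varphi_{k,\ell}$, whose number of variables is bounded by a function of $k+\ell$, such that for every hypergraph $H=(X,E)$, $H$ satisfies $\varphi_{k,\ell}$ if and only if $(H,k,\ell)$ is a YES-instance of \textsc{Partial VC Dimension}. In particular, \textsc{Partial VC Dimension} is expressible in this way also in monadic second-order logic (MSOL).
   Context: A hypergraph $H=(X,E)$ consists of a finite vertex set $X$ and a collection $E$ of subsets of $X$; it is viewed as a relational structure whose universe is $X\cup E$, with unary predicates for $X$ and $E$ and the binary incidence (membership) relation between vertices and hyperedges. A $\Sigma_1$ formula is a first-order formula of the form $\exists y_1\cdots\exists y_m\,\psi$ with $\psi$ quantifier-free. For $C\subseteq X$, the number of equivalence classes induced by $C$ is $|\{e\cap C: e\in E\}|$. \textsc{Partial VC Dimension}: given $H=(X,E)$ and integers $k,\ell$, decide whether there is $C\subseteq X$ with $|C|=k$ inducing at least $\ell$ distinct equivalence classes. *)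

(* Defs.v *)
From mathcomp Require Import all_boot.
Set Implicit Arguments. Unset Strict Implicit. Unset Printing Implicit Defensive.

(* A hypergraph H = (X, E): X a finite vertex set, E a set of subsets of X. *)
(* Its relational structure has universe X ∪ E (disjoint union). *)
Definition universe (X : finType) (E : {set {set X}}) : Type :=
  (X + {S : {set X} | S \in E})%type.
Arguments universe : clear implicits.

Inductive qf (n : nat) : Type :=
  | QTrue : qf n
  | QFalse : qf n
  | QVtx : 'I_n -> qf n
  | QEdge : 'I_n -> qf n
  | QInc : 'I_n -> 'I_n -> qf n        (* vertex x belongs to hyperedge y *)
  | QEq : 'I_n -> 'I_n -> qf n
  | QNot : qf n -> qf n
  | QAnd : qf n -> qf n -> qf n
  | QOr : qf n -> qf n -> qf n.

Definition isVtx X E (u : universe X E) : Prop :=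
  match u with inl _ => True | inr _ => False end.
Definition isEdge X E (u : universe X E) : Prop :=
  match u with inl _ => False | inr _ => True end.
Definition incid X E (u w : universe X E) : Prop :=
  match u, w with
  | inl v, inr e => v \in sval e
  | _, _ => False
  end.

Fixpoint qf_eval X E n (a : 'I_n -> universe X E) (f : qf n) : Prop :=
  match f with
  | QTrue => True
  | QFalse => False
  | QVtx i => isVtx (a i)
  | QEdge i => isEdge (a i)
  | QInc i j => incid (a i) (a j)
  | QEq i j => a i = a j
  | QNot g => ~ qf_eval a g
  | QAnd g h => qf_eval a g /\ qf_eval a h
  | QOr g h => qf_eval a g \/ qf_eval a h
  end.

(* A Sigma_1 sentence  exists y_1 ... exists y_m, psi  with psi quantifier-free. *)
Definition sigma1 : Type := {m : nat & qf m}.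
Definition nvars (phi : sigma1) : nat := projT1 phi.
Definition sat X (E : {set {set X}}) (phi : sigma1) : Prop :=
  exists a : 'I_(projT1 phi) -> universe X E, qf_eval a (projT2 phi).

Definition pvc_yes (X : finType) (E : {set {set X}}) (k l : nat) : Prop :=
  exists C : {set X}, #|C| = k /\ l <= #|[set e :&: C | e in E]|.

(* Main.v *)
Require Import Defs.
From mathcomp Require Import all_boot.
Set Implicit Arguments. Unset Strict Implicit.
From Stdlib Require Import Setoid.

Section Build.
Variables k l : nat.

Definition vv (i : 'I_k) : 'I_(k + l) := lshift l i.
Definition ee (j : 'I_l) : 'I_(k + l) := rshift k j.

Definition qall (I : finType) n (F : I -> qf n) : qf n :=
  foldr (fun i acc => QAnd (F i) acc) (QTrue n) (enum I).
Definition qex (I : finType) n (F : I -> qf n) : qf n :=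
  foldr (fun i acc => QOr (F i) acc) (QFalse n) (enum I).

Lemma qall_eval (I : finType) n X E (a : 'I_n -> universe X E) (F : I -> qf n) :
  qf_eval a (qall F) <-> forall i, qf_eval a (F i).
Proof.
rewrite /qall.
suff H : forall s : seq I, qf_eval a (foldr (fun i acc => QAnd (F i) acc) (QTrue n) s)
   <-> forall i, i \in s -> qf_eval a (F i).
  rewrite H; split => h i; [exact: h (mem_enum _ _) | by move=> _].
elim=> [|x s IH] /=; first by split.
rewrite IH; split.
  by case=> h1 h2 i; rewrite in_cons => /orP [/eqP -> | /h2].
by move=> h; split; [apply: h; rewrite in_cons eqxx | move=> i hi; apply: h; rewrite in_cons hi orbT].
Qed.

Lemma qex_eval (I : finType) n X E (a : 'I_n -> universe X E) (F : I -> qf n) :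
  qf_eval a (qex F) <-> exists i, qf_eval a (F i).
Proof.
rewrite /qex.
suff H : forall s : seq I, qf_eval a (foldr (fun i acc => QOr (F i) acc) (QFalse n) s)
   <-> exists i, i \in s /\ qf_eval a (F i).
  rewrite H; split; [by case=> i [_ h]; exists i | by case=> i h; exists i; rewrite mem_enum].
elim=> [|x s IH] /=; first by split; [|case=> i []].
rewrite IH; split.
  case; first by move=> h; exists x; rewrite in_cons eqxx.
  by case=> i [hi h]; exists i; rewrite in_cons hi orbT.
case=> i []; rewrite in_cons => /orP [/eqP -> h | hi h]; first by left.
by right; exists i.
Qed.

Definition psi : qf (k + l) :=
  QAnd (qall (fun i => QVtx (vv i)))
  (QAnd (qall (fun i => qall (fun i' => if i == i' then QTrue _ else QNot (QEq (vv i) (vv i')))))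
  (QAnd (qall (fun j => QEdge (ee j)))
   (qall (fun j => qall (fun j' => if j == j' then QTrue _ else
      qex (fun t => QOr (QAnd (QInc (vv t) (ee j)) (QNot (QInc (vv t) (ee j'))))
                        (QAnd (QNot (QInc (vv t) (ee j))) (QInc (vv t) (ee j'))))))))).

Definition phi : sigma1 := existT _ (k + l) psi.

Lemma split_vv (i : 'I_k) : split (vv i) = inl i.
Proof. exact: (unsplitK (inl i)). Qed.
Lemma split_ee (j : 'I_l) : split (ee j) = inr j.
Proof. exact: (unsplitK (inr j)). Qed.

Lemma phi_correct (X : finType) (E : {set {set X}}) : sat E phi <-> pvc_yes E k l.
Proof.
split.
- case=> a /=.
  rewrite /psi /= !qall_eval => -[H1 [H2 [H3 H4]]].
  have : forall i, exists x, a (vv i) = inl x.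
    by move=> i; move: (H1 i) => /=; case: (a (vv i)) => // x _; exists x.
  case/fin_all_exists => x hx.
  have : forall j, exists S, a (ee j) = inr S.
    by move=> j; move: (H3 j) => /=; case: (a (ee j)) => // S _; exists S.
  case/fin_all_exists => S hS.
  have xinj : injective x.
    move=> i i' e; apply/eqP; apply/negP => /negP ne.
    move: (H2 i); rewrite qall_eval => /(_ i'); rewrite (negbTE ne) /=.
    by rewrite !hx e.
  exists (x @: setT); split; first by rewrite card_imset // cardsT card_ord.
  set C := x @: setT.
  have -> : l = #|[set val (S j) :&: C | j in [set: 'I_l]]|.
    rewrite card_imset ?cardsT ?card_ord //.
    move=> j j' e; apply/eqP; apply/negP => /negP ne.
    move: (H4 j); rewrite qall_eval => /(_ j'); rewrite (negbTE ne) qex_eval.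
    case=> t /=; rewrite hx !hS /=.
    have xC : x t \in C by apply: imset_f; rewrite inE.
    have : (x t \in val (S j) :&: C) = (x t \in val (S j') :&: C) by rewrite e.
    rewrite !inE xC !andbT => ->.
    by case=> -[].
  apply: subset_leq_card; apply/subsetP => T /imsetP [j _ ->].
  by apply: imset_f; exact: (valP (S j)).
- case=> C [HC Hl].
  set T := [set e :&: C | e in E] in Hl.
  pose x (i : 'I_k) : X := enum_val (A := C) (cast_ord (esym HC) i).
  pose Tr (j : 'I_l) : {set X} := enum_val (A := T) (widen_ord Hl j).
  have : forall j, exists S : {S : {set X} | S \in E}, val S :&: C = Tr j.
    move=> j; have : Tr j \in T by apply: enum_valP.
    by case/imsetP => S HS ->; exists (exist _ S HS).
  case/fin_all_exists => S hS.
  pose a (m : 'I_(k + l)) : universe X E :=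
    match split m with inl i => inl (x i) | inr j => inr (S j) end.
  have hv : forall i, a (vv i) = inl (x i) by move=> i; rewrite /a split_vv.
  have he : forall j, a (ee j) = inr (S j) by move=> j; rewrite /a split_ee.
  exists a => /=; rewrite /psi /= !qall_eval; split; [|split; [|split]].
  + by move=> i; rewrite /= hv.
  + move=> i; rewrite qall_eval => i'; case: eqP => //= ne.
    rewrite !hv => -[] /enum_val_inj /cast_ord_inj; exact: ne.
  + by move=> j; rewrite /= he.
  + move=> j; rewrite qall_eval => j'; case: eqP => //= ne.
    rewrite qex_eval.
    have nT : Tr j <> Tr j'.
      move/enum_val_inj/(congr1 val) => /= e; apply: ne; exact: val_inj.
    have [y yC hy] : exists2 y, y \in C & (y \in val (S j)) != (y \in val (S j')).
      case: (boolP [exists y in C, (y \in val (S j)) != (y \in val (S j'))]).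
        by case/exists_inP => y ? ?; exists y.
      move/exists_inPn => hn; exfalso; apply: nT.
      rewrite -!hS; apply/setP => z; rewrite !inE.
      case zC: (z \in C); rewrite ?andbF ?andbT //.
      by move: (hn z zC) => /negPn /eqP.
    exists (cast_ord HC (enum_rank_in yC y)) => /=.
    rewrite hv !he /=.
    have -> : x (cast_ord HC (enum_rank_in yC y)) = y.
      by rewrite /x cast_ordK enum_rankK_in.
    by move: hy; case: (y \in val (S j)); case: (y \in val (S j')) => //= _; [left|right].
Qed.

End Build.

Theorem proposition1 :
  exists f : nat -> nat, forall k l : nat,
    exists phi : sigma1, nvars phi <= f (k + l) /\
      forall (X : finType) (E : {set {set X}}), sat E phi <-> pvc_yes E k l.
Proof.
exists id => k l; exists (phi k l); split; first by [].
exact: phi_correct.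
Qed.
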